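(* Let $S$ be a finite set of points in the plane whose convex hull is the triangle $ABC$ with $A,B,C\in S$, and suppose $S$ contains at least one point other than $A,B,C$. Let $A_1$ be a point of $S\setminus\{A,B,C\}$ at maximum distance from the line $BC$ among the points of $S\setminus\{A,B,C\}$. Then the segment $AA_1$ is an edge of every triangulation of $S$.
   Context: A triangulation of a finite planar point set $S$ is a maximal set of straight line segments whose endpoints are in $S$, which contain no point of $S$ other than their endpoints, and any two of which meet at most in a common endpoint. *)

(* Defs.v *)
From HB Require Import structures.
From mathcomp Require Import all_boot all_order all_algebra.
Set Implicit Arguments. Unset Strict Implicit. Unset Printing Implicit Defensive.
Import Order.TTheory GRing.Theory Num.Theory.
Local Open Scope ring_scope.

Definition pt (R : rcfType) := (R * R)%type.

Section Geometry.
Variable R : rcfType.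

(* twice the signed area of triangle pqr *)
Definition cross (p q r : pt R) : R :=
  (q.1 - p.1) * (r.2 - p.2) - (q.2 - p.2) * (r.1 - p.1).

Definition dist_line (b c x : pt R) : R :=
  `|cross b c x| / Num.sqrt ((c.1 - b.1) ^+ 2 + (c.2 - b.2) ^+ 2).

Definition hull (s : seq (pt R)) (x : pt R) : Prop :=
  exists w : nat -> R,
    (forall i, 0 <= w i) /\ \sum_(i < size s) w i = 1 /\
    x = (\sum_(i < size s) w i * (nth (0, 0) s i).1,
         \sum_(i < size s) w i * (nth (0, 0) s i).2).

Definition in_cseg (p q x : pt R) : Prop :=
  exists t : R, 0 <= t <= 1 /\
    x = (p.1 + t * (q.1 - p.1), p.2 + t * (q.2 - p.2)).

(* A segment is given by an (ordered) pair of endpoints; two pairs denote the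
   same segment iff they have the same endpoints. *)
Definition same_seg (e f : pt R * pt R) : Prop :=
  e = f \/ e = (f.2, f.1).

Definition is_endpoint (e : pt R * pt R) (x : pt R) : Prop := x = e.1 \/ x = e.2.

Definition valid_seg (S : seq (pt R)) (e : pt R * pt R) : Prop :=
  e.1 \in S /\ e.2 \in S /\ e.1 <> e.2 /\
  (forall x, x \in S -> in_cseg e.1 e.2 x -> is_endpoint e x).

Definition meet_ok (e f : pt R * pt R) : Prop :=
  forall x, in_cseg e.1 e.2 x -> in_cseg f.1 f.2 x ->
    is_endpoint e x /\ is_endpoint f x.

Definition seg_family_ok (S : seq (pt R)) (T : pt R * pt R -> Prop) : Prop :=
  (forall e, T e -> valid_seg S e) /\
  (forall e f, T e -> T f -> ~ same_seg e f -> meet_ok e f).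

Definition is_triangulation (S : seq (pt R)) (T : pt R * pt R -> Prop) : Prop :=
  seg_family_ok S T /\
  (forall e, seg_family_ok S (fun f => T f \/ f = e) ->
     exists f, T f /\ same_seg e f).

End Geometry.

(* Main.v *)
Require Import Defs.
From HB Require Import structures.
From mathcomp Require Import all_boot all_order all_algebra ring lra.
Import Order.TTheory GRing.Theory Num.Theory.
Local Open Scope ring_scope.

Lemma hull_mem (R : rcfType) (S : seq (pt R)) P : P \in S -> hull S P.
Proof.
move=> PS; set k : 'I_(size S) := Ordinal (etrans (index_mem P S) PS).
exists (fun i => if i == index P S then 1 else 0); split.
  by move=> i; case: ifP.
have E (F : nat -> R) : \sum_(i < size S) (if nat_of_ord i == index P S then 1 else 0) * F i = F (index P S).
  rewrite (bigD1 k) //= eqxx mul1r big1 ?addr0 // => i /negbTE ik.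
  have -> : (nat_of_ord i == index P S) = false.
    apply/negbTE; apply/negP => /eqP h; move/negP: ik; apply; apply/eqP/val_inj => /=; exact: h.
  by rewrite mul0r.
split.
  have := E (fun _ => 1); under eq_bigr do rewrite mulr1. by [].
rewrite (E (fun i => (nth (0,0) S i).1)) (E (fun i => (nth (0,0) S i).2)).
by rewrite nth_index //; case: P PS {k E}.
Qed.

Lemma hull3 (R : rcfType) (A B C P : pt R) : hull [:: A; B; C] P ->
  exists a b c : R, [/\ 0 <= a, 0 <= b, 0 <= c, a + b + c = 1 &
    P = (a * A.1 + b * B.1 + c * C.1, a * A.2 + b * B.2 + c * C.2)].
Proof.
case=> w [w0 [ws ->]]; move: ws; rewrite /= !big_ord_recl !big_ord0 /= => ws.
exists (w 0%N), (w 1%N), (w 2%N); split => //.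
  by rewrite -ws; ring.
by congr pair; ring.
Qed.

Definition hgt {R : rcfType} (B C A x : pt R) := cross B C x * cross B C A.

Lemma hgt_aff (R : rcfType) (B C A p q : pt R) t :
  hgt B C A (p.1 + t * (q.1 - p.1), p.2 + t * (q.2 - p.2)) =
  hgt B C A p + t * (hgt B C A q - hgt B C A p).
Proof. rewrite /hgt /cross /=; ring. Qed.

Lemma cseg_sym {R : rcfType} {p q x : pt R} : in_cseg p q x -> in_cseg q p x.
Proof.
case=> t [/andP [t0 t1] ->]; exists (1 - t); split.
  by apply/andP; split; lra.
congr pair; ring.
Qed.

Lemma divpar {R : rcfType} {t u a b : R} : u != 0 -> t * a = u * b -> b = t / u * a.
Proof. by move=> u0 e; rewrite mulrAC e [u * b]mulrC mulfK. Qed.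

Lemma hgt_tri (R : rcfType) (B C A : pt R) a b c :
  a + b + c = 1 ->
  hgt B C A (a * A.1 + b * B.1 + c * C.1, a * A.2 + b * B.2 + c * C.2) =
  a * (cross B C A) ^+ 2.
Proof.
move=> e; have -> : c = 1 - a - b by rewrite -e; ring.
rewrite /hgt /cross /=; ring.
Qed.

Theorem lemma4p2 (R : rcfType) (S : seq (pt R)) (A B C A1 : pt R) :
  A \in S -> B \in S -> C \in S ->
  cross A B C != 0 ->
  (forall x, hull S x <-> hull [:: A; B; C] x) ->
  (exists P, P \in S /\ P \notin [:: A; B; C]) ->
  A1 \in S -> A1 \notin [:: A; B; C] ->
  (forall P, P \in S -> P \notin [:: A; B; C] ->
     dist_line B C P <= dist_line B C A1) ->
  forall T : pt R * pt R -> Prop, is_triangulation S T ->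
    exists f, T f /\ same_seg (A, A1) f.
Proof.
move=> AS BS CS nABC Hh _ A1S A1n Hd T [Hok Hmax].
set s := cross B C A.
have s0 : s != 0 by move: nABC; rewrite /s /cross; congr (~~ (_ == _)); ring.
have s2 : 0 < s ^+ 2 by rewrite exprn_even_gt0.
move: A1n; rewrite !inE !negb_or => /and3P [A1A A1B A1C].
have Hin P : P \in S -> exists a, [/\ 0 <= a <= 1, hgt B C A P = a * s ^+ 2 &
    (a = 1 -> P = A)].
  move=> /hull_mem /Hh /hull3 [a [b [c [a0 b0 c0 e ->]]]].
  exists a; split.
  - by apply/andP; split; lra.
  - by rewrite hgt_tri.
  - move=> a1; have b00 : b = 0 by lra.
    have c00 : c = 0 by lra.
    by rewrite a1 b00 c00; case: (A) => x y /=; congr pair; ring.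
have hge0 P : P \in S -> 0 <= hgt B C A P.
  by case/Hin => a [/andP [a0 _] -> _]; apply: mulr_ge0 => //; apply: ltW.
have hA : hgt B C A A = s ^+ 2 by rewrite /hgt -/s expr2.
have hA1 : hgt B C A A1 < s ^+ 2.
  case: (Hin _ A1S) => a [/andP [a0 a1] -> aA].
  have : a != 1 by apply/negP => /eqP /aA h; move/eqP: A1A.
  move=> an1; rewrite -[X in _ < X]mul1r ltr_pM2r //.
  by rewrite lt_neqAle an1 a1.
have sq0 : 0 < Num.sqrt ((C.1 - B.1) ^+ 2 + (C.2 - B.2) ^+ 2).
  rewrite sqrtr_gt0 lt_neqAle addr_ge0 ?sqr_ge0 // andbT eq_sym paddr_eq0 ?sqr_ge0 //.
  rewrite !sqrf_eq0 !subr_eq0; apply/negP => /andP [/eqP e1 /eqP e2].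
  by move: s0; rewrite /s /cross e1 e2 !subrr !mul0r subrr eqxx.
have Hle P : P \in S -> P <> A -> hgt B C A P <= hgt B C A A1.
  move=> PS PA.
  have hB : hgt B C A B = 0 by rewrite /hgt /cross; ring.
  have hC : hgt B C A C = 0 by rewrite /hgt /cross; ring.
  case: (P =P B) => [->|PB]; first by rewrite hB hge0.
  case: (P =P C) => [->|PC]; first by rewrite hC hge0.
  have : P \notin [:: A; B; C].
    by rewrite !inE; apply/negP => /or3P [] /eqP.
  move=> /(Hd _ PS); rewrite /dist_line ler_pM2r ?invr_gt0 // => Hab.
  rewrite -(ger0_norm (hge0 _ PS)) -(ger0_norm (hge0 _ A1S)) /hgt !normrM.
  by apply: ler_wpM2r.
have AA1 : A <> A1 by move=> h; move: A1A; rewrite h eqxx.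
have seg1 Q : Q \in S -> in_cseg A A1 Q -> Q = A \/ Q = A1.
  move=> QS [u [/andP [u0 u1] EQ]].
  case: (Q =P A) => [|QA]; first by left.
  right; have := Hle _ QS QA; rewrite EQ hgt_aff hA => h.
  have u1' : u = 1 by nra.
  by rewrite u1'; case: (A1) (A) => ? ? [? ?] /=; congr pair; ring.
have col Q X t : Q \in S -> Q <> A ->
    (forall x, x \in S -> in_cseg A Q x -> x = A \/ x = Q) ->
    in_cseg A A1 X -> X <> A -> 0 <= t <= 1 ->
    X = (A.1 + t * (Q.1 - A.1), A.2 + t * (Q.2 - A.2)) -> Q = A1.
  move=> QS QA vQ [u [/andP [u0 u1] EX]] XA /andP [t0 t1] EX'.
  have e1 : t * (Q.1 - A.1) = u * (A1.1 - A.1).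
    by have := congr1 fst EX'; rewrite EX /= => h; apply: (addrI A.1); rewrite -h.
  have e2 : t * (Q.2 - A.2) = u * (A1.2 - A.2).
    by have := congr1 snd EX'; rewrite EX /= => h; apply: (addrI A.2); rewrite -h.
  have un0 : u != 0.
    by apply/eqP => u00; apply: XA; rewrite EX u00 !mul0r !addr0; case: (A).
  have tn0 : t != 0.
    by apply/eqP => t00; apply: XA; rewrite EX' t00 !mul0r !addr0; case: (A).
  case: (lerP t u) => tu.
    have : in_cseg A Q A1.
      exists (t / u); split.
        apply/andP; split; first by apply: divr_ge0.
        by rewrite ler_pdivrMr ?mul1r // lt_neqAle eq_sym un0.
      rewrite -(divpar un0 e1) -(divpar un0 e2).
      by case: (A1) => ? ? /=; congr pair; ring.
    case/(vQ _ A1S) => h; [by case: AA1 | by []].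
  have : in_cseg A A1 Q.
    exists (u / t); split.
      apply/andP; split; first by apply: divr_ge0.
      by rewrite ler_pdivrMr ?mul1r ?ltW // lt_neqAle eq_sym tn0.
    have e1' := esym e1; have e2' := esym e2.
    rewrite -(divpar tn0 e1') -(divpar tn0 e2').
    by case: (Q) => ? ? /=; congr pair; ring.
  by case/(seg1 _ QS).
have cr P Q X : valid_seg S (P, Q) -> ~ same_seg (A, A1) (P, Q) ->
    in_cseg A A1 X -> in_cseg P Q X ->
    is_endpoint (A, A1) X /\ is_endpoint (P, Q) X.
  move=> [PS [QS [PQ vPQ]]] nss HX HX'.
  case: (X =P A) => [XA|XA].
    by split; [left | apply: vPQ => //; rewrite XA].
  case: (X =P A1) => [XA1|XA1].
    by split; [right | apply: vPQ => //; rewrite XA1].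
  exfalso.
  have hX : hgt B C A A1 < hgt B C A X.
    case: HX => u [/andP [u0 u1] EX].
    have un1 : u != 1.
      by apply/eqP => u11; apply: XA1; rewrite EX u11 !mul1r; case: (A) (A1) => ? ? [? ?] /=; congr pair; ring.
    have ult : u < 1 by rewrite lt_neqAle un1 u1.
    rewrite EX hgt_aff hA; nra.
  simpl in *.
  case: (P =P A) => [PA|PnA].
    apply: nss; left; subst P.
    case: HX' => t [t01 EX']; rewrite (col Q X t) //.
    by move=> h; apply: PQ; rewrite h.
  case: (Q =P A) => [QA|QnA].
    apply: nss; right; subst Q.
    case: (cseg_sym HX') => t [t01 EX']; rewrite (col P X t) //.
    - by move=> x xS /cseg_sym hx; case: (vPQ x xS hx) => h; [right|left].
  have hP := Hle _ PS PnA; have hQ := Hle _ QS QnA.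
  case: HX' => t [/andP [t0 t1] EX']; move: hX; rewrite EX' hgt_aff; nra.
apply: Hmax; split.
  move=> e [Te|->]; first by apply: Hok.1.
  by do 3 (split => //); move=> x xS hx; apply: seg1.
move=> e f [Te|->] [Tf|->] nef.
- by apply: Hok.2.
- case: e Te nef => P Q Te nef x h1 h2.
  have nss : ~ same_seg (A, A1) (P, Q).
    by move=> [e1|e1]; apply: nef; [left|right]; case: e1 => /= -> ->.
  by case: (cr P Q x (Hok.1 _ Te) nss h2 h1).
- case: f Tf nef => P Q Tf nef x h1 h2.
  exact: (cr P Q x (Hok.1 _ Tf) nef h1 h2).
- by case: nef; left.
Qed.
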